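(* Let $\mathbb{C}$ be an almost exact Gumm category. Suppose given morphisms $\varphi\colon P\to Z$, $x\colon P\to X$, $f\colon X\to Y$, $y\colon Z\to Y$, $u\colon X\to U$, $v\colon Y\to V$, $w\colon U\to V$ with $fx=y\varphi$ and $wu=vf$, such that $\varphi,x,f,y$ are regular epimorphisms, the square $fx=y\varphi$ is a pushout, and the outer rectangle (the square with sides $\varphi$, $ux$, $vy$, $w$) is a pullback. Then both squares $fx=y\varphi$ and $wu=vf$ are pullbacks.
   Context: A regular category is a finitely complete category in which every kernel pair has a coequaliser and regular epimorphisms are stable under pullback. A regular category is almost exact if every regular epimorphism is an effective descent morphism; equivalently, for every regular epimorphism $f\colon X\to Y$ with kernel pair $R_f$ and every equivalence relation $R$ on an object $X'$ equipped with a morphism of relations $(g,h)\colon R\to R_f$ (with $g\colon X'\to X$) which is a discrete fibration (the squares formed by the projections are pullbacks), $R$ is an effective equivalence relation (a kernel pair). For equivalence relations $R,S$ on an object $X$, $R\square S$ denotes the largest double equivalence relation on $R$ and $S$: in generalized elements, the relation on $R$ consisting of pairs $((a,b),(c,d))$ with $(a,b),(c,d)\in R$, $(a,c)\in S$, $(b,d)\in S$, with projections $\pi_1,\pi_2$ to $R$. A finitely complete category is a Gumm category if for all equivalence relations $R,S,T$ on a same object with $R\wedge S\le T\le R$, the canonical inclusion $T\square S\to R\square S$ over $T\to R$ is a discrete fibration, i.e. the squares it forms with the projections $\pi_1$, $\pi_2$ are pullbacks. *)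

(* Defs.v *)
Record Category := {
  Ob :> Type;
  Hom : Ob -> Ob -> Type;
  idm : forall A, Hom A A;
  comp : forall A B C, Hom B C -> Hom A B -> Hom A C;
  comp_assoc : forall A B C D (h : Hom C D) (g : Hom B C) (f : Hom A B),
      comp A C D h (comp A B C g f) = comp A B D (comp B C D h g) f;
  id_left : forall A B (f : Hom A B), comp A B B (idm B) f = f;
  id_right : forall A B (f : Hom A B), comp A A B f (idm A) = f
}.

Arguments Hom {c} _ _.
Arguments idm {c} _.
Arguments comp {c} {A B C} _ _.

Notation "A ~> B" := (Hom A B) (at level 90, right associativity).
Notation "g \o f" := (comp g f) (at level 40, left associativity).

Section Cat.
Context {C : Category}.

Definition is_pullback {A B Cc P : C} (f : A ~> Cc) (g : B ~> Cc)
    (p1 : P ~> A) (p2 : P ~> B) : Prop :=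
  f \o p1 = g \o p2 /\
  forall (Q : C) (q1 : Q ~> A) (q2 : Q ~> B), f \o q1 = g \o q2 ->
    exists h : Q ~> P, p1 \o h = q1 /\ p2 \o h = q2 /\
      forall h' : Q ~> P, p1 \o h' = q1 -> p2 \o h' = q2 -> h' = h.

Definition is_pushout {P A B Q : C} (a : P ~> A) (b : P ~> B)
    (qa : A ~> Q) (qb : B ~> Q) : Prop :=
  qa \o a = qb \o b /\
  forall (W : C) (wa : A ~> W) (wb : B ~> W), wa \o a = wb \o b ->
    exists h : Q ~> W, h \o qa = wa /\ h \o qb = wb /\
      forall h' : Q ~> W, h' \o qa = wa -> h' \o qb = wb -> h' = h.

Definition is_terminal (T : C) : Prop :=
  forall A : C, exists h : A ~> T, forall h' : A ~> T, h' = h.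

Definition is_coequalizer {K X Q : C} (k1 k2 : K ~> X) (q : X ~> Q) : Prop :=
  q \o k1 = q \o k2 /\
  forall (W : C) (g : X ~> W), g \o k1 = g \o k2 ->
    exists h : Q ~> W, h \o q = g /\ forall h' : Q ~> W, h' \o q = g -> h' = h.

Definition regular_epi {X Y : C} (f : X ~> Y) : Prop :=
  exists (K : C) (k1 k2 : K ~> X), is_coequalizer k1 k2 f.

Definition is_kernel_pair {X Y K : C} (f : X ~> Y) (k1 k2 : K ~> X) : Prop :=
  is_pullback f f k1 k2.

Definition jointly_monic {A X Y : C} (a : A ~> X) (b : A ~> Y) : Prop :=
  forall (Q : C) (h k : Q ~> A), a \o h = a \o k -> b \o h = b \o k -> h = k.

(** Internal relations R on X are jointly monic spans r1, r2 : R ~> X;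
    reflexivity / symmetry / transitivity are stated in generalized elements. *)
Definition is_relation {R X : C} (r1 r2 : R ~> X) : Prop := jointly_monic r1 r2.

Definition rel_reflexive {R X : C} (r1 r2 : R ~> X) : Prop :=
  forall (A : C) (a : A ~> X), exists h : A ~> R, r1 \o h = a /\ r2 \o h = a.

Definition rel_symmetric {R X : C} (r1 r2 : R ~> X) : Prop :=
  forall (A : C) (h : A ~> R), exists h' : A ~> R,
    r1 \o h' = r2 \o h /\ r2 \o h' = r1 \o h.

Definition rel_transitive {R X : C} (r1 r2 : R ~> X) : Prop :=
  forall (A : C) (h k : A ~> R), r2 \o h = r1 \o k ->
    exists l : A ~> R, r1 \o l = r1 \o h /\ r2 \o l = r2 \o k.

Definition is_equivalence_relation {R X : C} (r1 r2 : R ~> X) : Prop :=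
  is_relation r1 r2 /\ rel_reflexive r1 r2 /\ rel_symmetric r1 r2 /\
  rel_transitive r1 r2.

Definition effective_relation {R X : C} (r1 r2 : R ~> X) : Prop :=
  exists (W : C) (g : X ~> W), is_kernel_pair g r1 r2.

Definition rel_le {R T X : C} (r1 r2 : R ~> X) (t1 t2 : T ~> X) : Prop :=
  exists m : R ~> T, t1 \o m = r1 /\ t2 \o m = r2.

(** R /\ S <= T, in generalized elements:
    every pair (a,b) lying in both R and S lies in T. *)
Definition meet_le {R S T X : C} (r1 r2 : R ~> X) (s1 s2 : S ~> X)
    (t1 t2 : T ~> X) : Prop :=
  forall (A : C) (a : A ~> R) (b : A ~> S), r1 \o a = s1 \o b -> r2 \o a = s2 \o b ->
    exists c : A ~> T, t1 \o c = r1 \o a /\ t2 \o c = r2 \o a.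

(** (D, p1, p2) represents R [] S : the relation on R consisting of the pairs
    ((a,b),(c,d)) of elements of R with (a,c) in S and (b,d) in S. *)
Definition is_box {R S D X : C} (r1 r2 : R ~> X) (s1 s2 : S ~> X)
    (p1 p2 : D ~> R) : Prop :=
  jointly_monic p1 p2 /\
  forall (A : C) (e1 e2 : A ~> R),
    (exists d : A ~> D, p1 \o d = e1 /\ p2 \o d = e2) <->
    ((exists s : A ~> S, s1 \o s = r1 \o e1 /\ s2 \o s = r1 \o e2) /\
     (exists s : A ~> S, s1 \o s = r2 \o e1 /\ s2 \o s = r2 \o e2)).

End Cat.

Definition finitely_complete (C : Category) : Prop :=
  (exists T : C, is_terminal T) /\
  forall (A B D : C) (f : A ~> D) (g : B ~> D),
    exists (P : C) (p1 : P ~> A) (p2 : P ~> B), is_pullback f g p1 p2.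

Definition regular_category (C : Category) : Prop :=
  finitely_complete C /\
  (forall (X Y K : C) (f : X ~> Y) (k1 k2 : K ~> X), is_kernel_pair f k1 k2 ->
     exists (Q : C) (q : X ~> Q), is_coequalizer k1 k2 q) /\
  (forall (A B D P : C) (f : A ~> D) (g : B ~> D) (p1 : P ~> A) (p2 : P ~> B),
     is_pullback f g p1 p2 -> regular_epi g -> regular_epi p1).

(** Almost exact: for every regular epi f with kernel pair R_f, every
    equivalence relation R with a discrete fibration (g,h) : R -> R_f is
    effective. *)
Definition almost_exact (C : Category) : Prop :=
  regular_category C /\
  forall (X Y K : C) (f : X ~> Y) (k1 k2 : K ~> X),
    regular_epi f -> is_kernel_pair f k1 k2 ->
    forall (X' R : C) (r1 r2 : R ~> X') (g : X' ~> X) (h : R ~> K),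
      is_equivalence_relation r1 r2 ->
      k1 \o h = g \o r1 -> k2 \o h = g \o r2 ->
      is_pullback g k1 r1 h -> is_pullback g k2 r2 h ->
      effective_relation r1 r2.

(** Gumm: for equivalence relations R, S, T on X with R /\ S <= T <= R,
    the canonical inclusion T [] S -> R [] S over m : T -> R is a discrete
    fibration. *)
Definition gumm_category (C : Category) : Prop :=
  finitely_complete C /\
  forall (X R S T : C) (r1 r2 : R ~> X) (s1 s2 : S ~> X) (t1 t2 : T ~> X),
    is_equivalence_relation r1 r2 -> is_equivalence_relation s1 s2 ->
    is_equivalence_relation t1 t2 ->
    meet_le r1 r2 s1 s2 t1 t2 ->
    forall m : T ~> R, r1 \o m = t1 -> r2 \o m = t2 ->
    forall (DT DR : C) (p1 p2 : DT ~> T) (q1 q2 : DR ~> R),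
      is_box t1 t2 s1 s2 p1 p2 -> is_box r1 r2 s1 s2 q1 q2 ->
      forall i : DT ~> DR, q1 \o i = m \o p1 -> q2 \o i = m \o p2 ->
        is_pullback q1 m i p1 /\ is_pullback q2 m i p2.

(* Main.v *)
Require Import Defs.

Ltac ra := repeat rewrite <- comp_assoc.

Lemma ext2 {C : Category} {A B B' D : C} (a : B ~> D) (b : A ~> B) (c : B' ~> D) (d : A ~> B') :
  a \o b = c \o d -> forall Q (h : Q ~> A), a \o (b \o h) = c \o (d \o h).
Proof. intros E Q h. rewrite !comp_assoc, E. reflexivity. Qed.

Lemma regepi_epi {C : Category} {X Y : C} (f : X ~> Y) : regular_epi f ->
  forall W (a b : Y ~> W), a \o f = b \o f -> a = b.
Proof.
  intros [K [k1 [k2 [Hc Hu]]]] W a b E.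
  destruct (Hu W (a \o f)) as [h [_ Hh]].
  { ra. rewrite Hc. reflexivity. }
  rewrite (Hh a eq_refl), (Hh b (eq_sym E)). reflexivity.
Qed.

Lemma regepi_desc {C : Category} {X Y W : C} (c : X ~> Y) (g : X ~> W) : regular_epi c ->
  (forall Q (k1 k2 : Q ~> X), c \o k1 = c \o k2 -> g \o k1 = g \o k2) ->
  exists h, h \o c = g.
Proof.
  intros [K [k1 [k2 [Hc Hu]]]] H.
  destruct (Hu W g (H K k1 k2 Hc)) as [h [Hh _]]. eauto.
Qed.

Lemma pb_jm {C : Category} {A B Cc P : C} (f : A ~> Cc) (g : B ~> Cc) (p1 : P ~> A) (p2 : P ~> B) :
  is_pullback f g p1 p2 -> jointly_monic p1 p2.
Proof.
  intros [Hc Hu] Q h k E1 E2.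
  destruct (Hu Q (p1 \o h) (p2 \o h)) as [m [_ [_ Hm]]].
  { rewrite !comp_assoc, Hc. reflexivity. }
  rewrite (Hm h eq_refl eq_refl), (Hm k (eq_sym E1) (eq_sym E2)). reflexivity.
Qed.

Lemma cover {C : Category} (HR : regular_category C) {A B D : C} (e : B ~> D) (a : A ~> D) :
  regular_epi e -> exists A1 (c : A1 ~> A) (s : A1 ~> B), regular_epi c /\ a \o c = e \o s.
Proof.
  intros He. destruct HR as [[_ Hpb] [_ Hst]].
  destruct (Hpb _ _ _ a e) as [Q [p1 [p2 Hp]]].
  exists Q, p1, p2. split. eapply Hst; eauto. apply Hp.
Qed.

Lemma prod_ex {C : Category} (HF : finitely_complete C) (X Y : C) :
  exists (Pr : C) (p1 : Pr ~> X) (p2 : Pr ~> Y), jointly_monic p1 p2 /\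
    forall Q (a : Q ~> X) (b : Q ~> Y), exists h, p1 \o h = a /\ p2 \o h = b.
Proof.
  destruct HF as [[T HT] Hpb].
  destruct (HT X) as [tX _]. destruct (HT Y) as [tY _].
  destruct (Hpb _ _ _ tX tY) as [Pr [p1 [p2 Hp]]].
  exists Pr, p1, p2. split. eapply pb_jm; eauto.
  intros Q a b. destruct Hp as [_ Hu].
  destruct (Hu Q a b) as [h [H1 [H2 _]]].
  { destruct (HT Q) as [t Ht]. rewrite (Ht (tX \o a)), (Ht (tY \o b)). reflexivity. }
  eauto.
Qed.

Lemma kp_mem {C : Category} {X Y K : C} (f : X ~> Y) (k1 k2 : K ~> X) :
  is_kernel_pair f k1 k2 -> forall A (a b : A ~> X), f \o a = f \o b ->
  exists h, k1 \o h = a /\ k2 \o h = b.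
Proof. intros [_ Hu] A a b E. destruct (Hu A a b E) as [h [H1 [H2 _]]]; eauto. Qed.

Lemma kp_eq {C : Category} {X Y K : C} (f : X ~> Y) (k1 k2 : K ~> X) :
  is_kernel_pair f k1 k2 -> forall A (h : A ~> K), f \o (k1 \o h) = f \o (k2 \o h).
Proof. intros [Hc _] A h. apply ext2. exact Hc. Qed.

Lemma kp_equiv {C : Category} {X Y K : C} (f : X ~> Y) (k1 k2 : K ~> X) :
  is_kernel_pair f k1 k2 -> is_equivalence_relation k1 k2.
Proof.
  intros H. split; [|split; [|split]].
  - eapply pb_jm; eauto.
  - intros A a. apply (kp_mem f); auto.
  - intros A h. destruct (kp_mem f k1 k2 H A (k2 \o h) (k1 \o h)) as [h' [? ?]].
    { symmetry. apply (kp_eq f); auto. }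
    eauto.
  - intros A h k E. destruct (kp_mem f k1 k2 H A (k1 \o h) (k2 \o k)) as [h' [? ?]].
    { rewrite (kp_eq f k1 k2 H), E. apply (kp_eq f); auto. }
    eauto.
Qed.

Lemma kp_ex {C : Category} (HF : finitely_complete C) {X Y : C} (f : X ~> Y) :
  exists K (k1 k2 : K ~> X), is_kernel_pair f k1 k2.
Proof. destruct HF as [_ Hpb]. apply Hpb. Qed.

Lemma cA {C : Category} {A B D E : C} (h : D ~> E) (g : B ~> D) (f : A ~> B) :
  h \o (g \o f) = (h \o g) \o f.
Proof. apply comp_assoc. Qed.

Lemma box_ex {C : Category} (HF : finitely_complete C) {P Z R S : C}
  (r1 r2 : R ~> P) (phi : P ~> Z) (s1 s2 : S ~> P) : is_kernel_pair phi s1 s2 ->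
  exists D (p1 p2 : D ~> R), is_box r1 r2 s1 s2 p1 p2.
Proof.
  intros Hk.
  destruct (prod_ex HF Z Z) as [ZZ [pi1 [pi2 [Hjm Hpr]]]].
  destruct (Hpr _ (phi \o r1) (phi \o r2)) as [rho [Hr1 Hr2]].
  destruct (kp_ex HF rho) as [D [p1 [p2 Hkp]]].
  exists D, p1, p2. split. eapply pb_jm; eauto.
  intros A e1 e2. split.
  - intros [d [<- <-]]. pose proof (kp_eq _ _ _ Hkp A d) as E.
    split; apply (kp_mem phi s1 s2 Hk).
    + assert (pi1 \o (rho \o (p1 \o d)) = pi1 \o (rho \o (p2 \o d))) by (rewrite E; reflexivity).
      rewrite !comp_assoc, Hr1 in H. rewrite <- !comp_assoc in H. exact H.
    + assert (pi2 \o (rho \o (p1 \o d)) = pi2 \o (rho \o (p2 \o d))) by (rewrite E; reflexivity).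
      rewrite !comp_assoc, Hr2 in H. rewrite <- !comp_assoc in H. exact H.
  - intros [[s [Hs1 Hs2]] [s' [Hs1' Hs2']]].
    apply (kp_mem rho p1 p2 Hkp). apply Hjm.
    + rewrite !comp_assoc, Hr1. ra. rewrite <- Hs1, <- Hs2. apply (kp_eq phi); auto.
    + rewrite !comp_assoc, Hr2. ra. rewrite <- Hs1', <- Hs2'. apply (kp_eq phi); auto.
Qed.

Lemma image_ex {C : Category} (HR : regular_category C) {A X : C} (a b : A ~> X) :
  exists E (e : A ~> E) (e1 e2 : E ~> X), regular_epi e /\ e1 \o e = a /\ e2 \o e = b /\
    jointly_monic e1 e2.
Proof.
  pose proof HR as [HF [Hco Hst]].
  destruct (prod_ex HF X X) as [XX [pi1 [pi2 [Hjm Hpr]]]].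
  destruct (Hpr _ a b) as [rho [Hr1 Hr2]].
  destruct (kp_ex HF rho) as [L [l1 [l2 Hkp]]].
  destruct (Hco _ _ _ _ _ _ Hkp) as [E [e He]].
  assert (Hre : regular_epi e) by (exists L, l1, l2; exact He).
  destruct He as [Hel Heu].
  destruct (Heu XX rho) as [i [Hi _]]. { apply Hkp. }
  exists E, e, (pi1 \o i), (pi2 \o i). split; [exact Hre|split; [|split]].
  - rewrite <- comp_assoc, Hi. exact Hr1.
  - rewrite <- comp_assoc, Hi. exact Hr2.
  - intros Q h h' E1 E2. ra.
    assert (Eih : i \o h = i \o h') by (apply Hjm; rewrite !comp_assoc; assumption).
    destruct (cover HR e h Hre) as [Q1 [c1 [s [Hc1 Hs]]]].
    destruct (cover HR e (h' \o c1) Hre) as [Q2 [c2 [s' [Hc2 Hs']]]].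
    destruct (kp_mem rho l1 l2 Hkp Q2 (s \o c2) s') as [m [Hm1 Hm2]].
    { rewrite <- Hi. rewrite <- !cA. rewrite <- Hs'. rewrite (cA e s c2), <- Hs.
      rewrite !cA, Eih. reflexivity. }
    assert (Hfin : (h \o c1) \o c2 = (h' \o c1) \o c2).
    { rewrite Hs, Hs'. rewrite <- cA, <- Hm1, <- Hm2. rewrite !cA, Hel. reflexivity. }
    apply (regepi_epi c1 Hc1). apply (regepi_epi c2 Hc2). exact Hfin.
Qed.

Ltac nrm := repeat rewrite <- cA.
Ltac nrmh H := repeat rewrite <- cA in H.

Theorem proposition4p2 (C : Category) (HC : almost_exact C) (HG : gumm_category C)
  (P Z X Y U V : C)
  (phi : P ~> Z) (x : P ~> X) (f : X ~> Y) (y : Z ~> Y)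
  (u : X ~> U) (v : Y ~> V) (w : U ~> V) :
  f \o x = y \o phi ->
  w \o u = v \o f ->
  regular_epi phi -> regular_epi x -> regular_epi f -> regular_epi y ->
  is_pushout x phi f y ->
  is_pullback w (v \o y) (u \o x) phi ->
  is_pullback f y x phi /\ is_pullback w v u f.
Proof.
  intros Hfx Hwu Hphi Hx Hf Hy Hpo Hout.
  destruct HC as [HR Hae]. pose proof HR as [HF _]. destruct HG as [_ Hgumm].
  pose proof (ext2 _ _ _ _ Hfx) as Hfx'. pose proof (ext2 _ _ _ _ Hwu) as Hwu'.
  assert (JM : forall Q (p p' : Q ~> P), u \o (x \o p) = u \o (x \o p') ->
            phi \o p = phi \o p' -> p = p').
  { intros Q p p' E1 E2. apply (pb_jm _ _ _ _ Hout); auto. rewrite <- !cA. exact E1. }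
  assert (OE : forall Q (t : Q ~> U) (z : Q ~> Z), w \o t = v \o (y \o z) ->
            exists p, u \o (x \o p) = t /\ phi \o p = z).
  { intros Q t z E. destruct Hout as [_ Hu].
    destruct (Hu Q t z) as [p [H1 [H2 _]]]. { rewrite E, cA. reflexivity. }
    exists p. rewrite cA. auto. }
  destruct (kp_ex HF phi) as [S [s1 [s2 HS]]].
  destruct (kp_ex HF x) as [KX [x1 [x2 HKX]]].
  destruct (kp_ex HF (u \o x)) as [T [t1 [t2 HT]]].
  assert (SHIFT : forall A (a b b' a'' : A ~> P), phi \o a = phi \o b -> x \o b = x \o b' ->
            u \o (x \o a'') = u \o (x \o a) -> phi \o a'' = phi \o b' -> x \o a'' = x \o a).
  { intros A a b b' a'' Hab Hbb' Ha1 Ha2.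
    assert (mle : meet_le t1 t2 s1 s2 x1 x2).
    { intros A0 a0 b0 E1 E2.
      assert (Eq0 : t1 \o a0 = t2 \o a0).
      { apply JM.
        - pose proof (kp_eq _ _ _ HT A0 a0) as K. nrmh K. exact K.
        - rewrite E1, E2. apply (kp_eq _ _ _ HS). }
      destruct (kp_mem _ _ _ HKX A0 (t1 \o a0) (t2 \o a0)) as [c [? ?]].
      { rewrite Eq0. reflexivity. }
      eauto. }
    destruct (kp_mem _ _ _ HT KX x1 x2) as [m [Hm1 Hm2]]. { rewrite <- !cA, (proj1 HKX). reflexivity. }
    destruct (box_ex HF x1 x2 phi s1 s2 HS) as [DT [p1 [p2 HDT]]].
    destruct (box_ex HF t1 t2 phi s1 s2 HS) as [DR [q1 [q2 HDR]]].
    destruct (proj2 (proj2 HDR DT (m \o p1) (m \o p2))) as [i [Hi1 Hi2]].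
    { destruct (proj1 (proj2 HDT DT p1 p2)) as [[s [E1 E2]] [s' [E1' E2']]].
      { exists (idm _). rewrite !id_right. auto. }
      split; [exists s|exists s']; rewrite !cA, ?Hm1, ?Hm2; auto. }
    destruct (Hgumm _ _ _ _ _ _ _ _ _ _ (kp_equiv _ _ _ HT) (kp_equiv _ _ _ HS)
                (kp_equiv _ _ _ HKX) mle m Hm1 Hm2 _ _ _ _ _ _ HDT HDR i Hi1 Hi2) as [Hpb1 _].
    destruct (kp_mem _ _ _ HKX A b b' Hbb') as [kx [Hkx1 Hkx2]].
    destruct (kp_mem _ _ _ HT A b b') as [kb [Hkb1 Hkb2]].
    { nrm. rewrite Hbb'. reflexivity. }
    destruct (kp_mem _ _ _ HT A a a'') as [ka [Hka1 Hka2]].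
    { nrm. auto. }
    destruct (proj2 (proj2 HDR A kb ka)) as [d [Hd1 Hd2]].
    { split.
      - destruct (kp_mem _ _ _ HS A b a) as [s [? ?]]. { auto. }
        exists s. rewrite Hkb1, Hka1. auto.
      - destruct (kp_mem _ _ _ HS A b' a'') as [s [? ?]].
        { rewrite Ha2. reflexivity. }
        exists s. rewrite Hkb2, Hka2. auto. }
    destruct Hpb1 as [_ Hpu].
    destruct (Hpu A d kx) as [hh [Hh1 [Hh2 _]]].
    { apply (pb_jm _ _ _ _ HT).
      - rewrite Hd1, Hkb1, cA, Hm1, Hkx1. reflexivity.
      - rewrite Hd1, Hkb2, cA, Hm2, Hkx2. reflexivity. }
    assert (Eka : ka = m \o (p2 \o hh)).
    { rewrite <- Hd2, <- Hh1, cA, Hi2. rewrite cA. reflexivity. }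
    rewrite <- Hka1, <- Hka2, Eka, (cA t1 m), (cA t2 m), Hm1, Hm2.
    symmetry. apply (kp_eq _ _ _ HKX). }

  destruct (image_ex HR (x \o s1) (x \o s2)) as [E [e [e1 [e2 [He [He1 [He2 Hjm]]]]]]].
  pose proof (ext2 _ _ _ _ He1) as He1'. pose proof (ext2 _ _ _ _ He2) as He2'.
  assert (Eintro : forall A (a c : A ~> P), phi \o a = phi \o c ->
            exists h : A ~> E, e1 \o h = x \o a /\ e2 \o h = x \o c).
  { intros A a c Hac. destruct (kp_mem _ _ _ HS A a c Hac) as [s [Hs1 Hs2]].
    exists (e \o s). rewrite He1', He2', Hs1, Hs2. auto. }
  assert (Edesc : forall A A1 (al be : A ~> X) (cv : A1 ~> A) (h1 : A1 ~> E), regular_epi cv ->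
      e1 \o h1 = al \o cv -> e2 \o h1 = be \o cv -> exists h, e1 \o h = al /\ e2 \o h = be).
  { intros A A1 al be cv h1 Hcv E1 E2.
    destruct (regepi_desc cv h1 Hcv) as [h Hh].
    { intros Q k1 k2 Ek. apply Hjm; rewrite !cA, ?E1, ?E2; nrm; rewrite Ek; reflexivity. }
    exists h. split; apply (regepi_epi cv Hcv); nrm; rewrite Hh; auto. }
  assert (Eelim : forall A (h : A ~> E), exists A1 (cv : A1 ~> A) (a c : A1 ~> P),
      regular_epi cv /\ phi \o a = phi \o c /\ x \o a = e1 \o (h \o cv) /\ x \o c = e2 \o (h \o cv)).
  { intros A h. destruct (cover HR e h He) as [A1 [cv [s [Hcv Hs]]]].
    exists A1, cv, (s1 \o s), (s2 \o s). split; [auto|split;[apply (kp_eq _ _ _ HS)| ]].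
    rewrite Hs, He1', He2'. auto. }
  assert (Ediag : forall A (h : A ~> E), u \o (e1 \o h) = u \o (e2 \o h) -> e1 \o h = e2 \o h).
  { intros A h Hu. destruct (Eelim A h) as [A1 [cv [a [c [Hcv [Hac [Ha Hc]]]]]]].
    assert (a = c).
    { apply JM; auto. rewrite Ha, Hc.
      pose proof (f_equal (fun g => g \o cv) Hu) as Hu2; simpl in Hu2; nrmh Hu2; exact Hu2. }
    subst c. apply (regepi_epi cv Hcv). nrm. rewrite <- Ha, <- Hc. reflexivity. }
  assert (Eequiv : is_equivalence_relation e1 e2).
  { split; [exact Hjm | split; [|split]].
    - intros A al. destruct (cover HR x al Hx) as [A1 [cv [a [Hcv Ha]]]].
      destruct (Eintro A1 a a eq_refl) as [h1 [H1 H2]].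
      apply (Edesc A A1 al al cv h1 Hcv); [rewrite H1 | rewrite H2]; auto.
    - intros A h. destruct (Eelim A h) as [A1 [cv [a [c [Hcv [Hac [Ha Hc]]]]]]].
      destruct (Eintro A1 c a (eq_sym Hac)) as [h1 [H1 H2]].
      apply (Edesc A A1 (e2 \o h) (e1 \o h) cv h1 Hcv).
      + rewrite H1, Hc, cA; reflexivity.
      + rewrite H2, Ha, cA; reflexivity.
    - intros A h k Ehk.
      destruct (Eelim A h) as [A1 [cv1 [a [b [Hcv1 [Hab [Ha Hb]]]]]]].
      destruct (Eelim A1 (k \o cv1)) as [A2 [cv2 [b' [d [Hcv2 [Hbd [Hb' Hd]]]]]]].
      assert (Hxb : x \o (b \o cv2) = x \o b').
      { rewrite cA, Hb, Hb'. nrm. rewrite (cA e2 h), Ehk, <- cA. reflexivity. }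
      destruct (OE A2 (u \o (x \o (a \o cv2))) (phi \o b')) as [a'' [Ha1 Ha2]].
      { rewrite Hwu', Hfx'. rewrite (cA phi a cv2), Hab, <- (cA phi b cv2).
        rewrite <- Hfx', Hxb, Hfx'. reflexivity. }
      assert (Hsh := SHIFT A2 (a \o cv2) (b \o cv2) b' a''
                  ltac:(rewrite !cA, Hab; reflexivity) Hxb Ha1 Ha2).
      destruct (Eintro A2 a'' d ltac:(rewrite Ha2; exact Hbd)) as [h2 [G1 G2]].
      destruct (Edesc A1 A2 (e1 \o (h \o cv1)) (e2 \o (k \o cv1)) cv2 h2 Hcv2) as [h1 [F1 F2]].
      + rewrite G1, Hsh, cA, Ha. reflexivity.
      + rewrite G2, Hd. nrm. reflexivity.
      + apply (Edesc A A1 (e1 \o h) (e2 \o k) cv1 h1 Hcv1).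
        * rewrite F1, cA. reflexivity.
        * rewrite F2, cA. reflexivity. }
  destruct Eequiv as [_ [Erefl [Esym Etrans]]].
  assert (Euniq : forall A (h h' : A ~> E), e1 \o h = e1 \o h' ->
            u \o (e2 \o h) = u \o (e2 \o h') -> h = h').
  { intros A h h' E1 E2. apply Hjm; auto.
    destruct (Esym A h) as [hs [Hs1 Hs2]].
    destruct (Etrans A hs h') as [l [Hl1 Hl2]]. { rewrite Hs2. exact E1. }
    rewrite <- Hs1, <- Hl1, Ediag; auto. rewrite Hl1, Hl2, Hs1. exact E2. }
  assert (Euniq2 : forall A (h h' : A ~> E), e2 \o h = e2 \o h' ->
            u \o (e1 \o h) = u \o (e1 \o h') -> h = h').
  { intros A h h' E1 E2. apply Hjm; auto.
    destruct (Esym A h') as [hs [Hs1 Hs2]].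
    destruct (Etrans A h hs) as [l [Hl1 Hl2]]. { rewrite Hs1. exact E1. }
    rewrite <- Hs2, <- Hl2, <- Ediag; auto. rewrite Hl1, Hl2, Hs2. exact E2. }
  destruct (kp_ex HF w) as [K [k1 [k2 HK]]].
  destruct (proj1 (proj2 HR) _ _ _ _ _ _ HK) as [Q0 [q Hq]].
  assert (Hrq : regular_epi q) by (exists K, k1, k2; exact Hq).
  assert (HKq : is_kernel_pair q k1 k2).
  { destruct Hq as [Hqc Hqu]. destruct (Hqu _ w (proj1 HK)) as [mw [Hmw _]].
    split; [exact Hqc|]. intros Q q1' q2' Eq. apply (proj2 HK).
    rewrite <- Hmw, <- !cA, Eq. reflexivity. }
  destruct (kp_mem _ _ _ HK E (u \o e1) (u \o e2)) as [hE [HhE1 HhE2]].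
  { apply (regepi_epi e He). nrm. rewrite He1, He2. nrm. rewrite !Hwu', !Hfx', (proj1 HS).
    reflexivity. }
  assert (HwK : forall Q (g : Q ~> K), w \o (k1 \o g) = w \o (k2 \o g)) by (apply (kp_eq _ _ _ HK)).
  assert (Hpb1 : is_pullback u k1 e1 hE).
  { split; [symmetry; exact HhE1|]. intros Q q1' q2' Equ.
    destruct (cover HR x q1' Hx) as [Q1 [cv [a [Hcv Ha]]]].
    destruct (OE Q1 (k2 \o (q2' \o cv)) (phi \o a)) as [p' [Hp1 Hp2]].
    { rewrite <- HwK, (cA k1 q2' cv), <- Equ, <- cA, Ha, Hwu', Hfx'. reflexivity. }
    destruct (Eintro Q1 a p' (eq_sym Hp2)) as [h1 [G1 G2]].
    destruct (regepi_desc cv h1 Hcv) as [hh Hhh].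
    { intros Q2 l1 l2 El. apply Euniq.
      - rewrite !cA, G1, <- Ha, <- !cA, El. reflexivity.
      - rewrite (cA e2 h1 l1), (cA e2 h1 l2), G2, (cA u (x \o p') l1), (cA u (x \o p') l2), Hp1. nrm. rewrite El. reflexivity. }
    assert (Hh1 : e1 \o hh = q1').
    { apply (regepi_epi cv Hcv). nrm. rewrite Hhh, G1, Ha. reflexivity. }
    assert (Hh2 : u \o (e2 \o hh) = k2 \o q2').
    { apply (regepi_epi cv Hcv). nrm. rewrite Hhh, G2, Hp1. reflexivity. }
    exists hh. split; [exact Hh1|split].
    - apply (pb_jm _ _ _ _ HK).
      + rewrite cA, HhE1, <- cA, Hh1, Equ. reflexivity.
      + rewrite cA, HhE2, <- cA, Hh2. reflexivity.
    - intros h' H1 H2. apply Euniq.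
      + rewrite H1, Hh1. reflexivity.
      + rewrite Hh2, (cA u e2 h'), <- HhE2, <- cA, H2. reflexivity. }
  assert (Hpb2 : is_pullback u k2 e2 hE).
  { split; [symmetry; exact HhE2|]. intros Q q1' q2' Equ.
    destruct (cover HR x q1' Hx) as [Q1 [cv [a [Hcv Ha]]]].
    destruct (OE Q1 (k1 \o (q2' \o cv)) (phi \o a)) as [p' [Hp1 Hp2]].
    { rewrite HwK, (cA k2 q2' cv), <- Equ, <- cA, Ha, Hwu', Hfx'. reflexivity. }
    destruct (Eintro Q1 p' a Hp2) as [h1 [G1 G2]].
    destruct (regepi_desc cv h1 Hcv) as [hh Hhh].
    { intros Q2 l1 l2 El. apply Euniq2.
      - rewrite !cA, G2, <- Ha, <- !cA, El. reflexivity.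
      - rewrite (cA e1 h1 l1), (cA e1 h1 l2), G1, (cA u (x \o p') l1), (cA u (x \o p') l2), Hp1. nrm. rewrite El. reflexivity. }
    assert (Hh1 : e2 \o hh = q1').
    { apply (regepi_epi cv Hcv). nrm. rewrite Hhh, G2, Ha. reflexivity. }
    assert (Hh2 : u \o (e1 \o hh) = k1 \o q2').
    { apply (regepi_epi cv Hcv). nrm. rewrite Hhh, G1, Hp1. reflexivity. }
    exists hh. split; [exact Hh1|split].
    - apply (pb_jm _ _ _ _ HK).
      + rewrite cA, HhE1, <- cA, Hh2. reflexivity.
      + rewrite cA, HhE2, <- cA, Hh1, Equ. reflexivity.
    - intros h' H1 H2. apply Euniq2.
      + rewrite H1, Hh1. reflexivity.
      + rewrite Hh2, (cA u e1 h'), <- HhE1, <- cA, H2. reflexivity. }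
  destruct (Hae _ _ _ q k1 k2 Hrq HKq X E e1 e2 u hE (conj Hjm (conj Erefl (conj Esym Etrans)))
              HhE1 HhE2 Hpb1 Hpb2) as [W [g Hg]].
  destruct (regepi_desc phi (g \o x) Hphi) as [kz Hkz].
  { intros Q l1 l2 El. destruct (Eintro Q l1 l2 El) as [h [H1 H2]].
    nrm. rewrite <- H1, <- H2. apply (kp_eq _ _ _ Hg). }
  destruct Hpo as [_ Hpu].
  destruct (Hpu W g kz (eq_sym Hkz)) as [hY [HhY _]].
  assert (UF : forall A (a b : A ~> X), u \o a = u \o b -> f \o a = f \o b -> a = b).
  { intros A a b E1 E2.
    destruct (kp_mem _ _ _ Hg A a b) as [h [H1 H2]].
    { rewrite <- HhY, <- !cA, E2. reflexivity. }
    rewrite <- H1, <- H2. apply Ediag. rewrite H1, H2. exact E1. }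
  split.
  - split; [exact Hfx|]. intros Q q1 q2 Eq.
    destruct (OE Q (u \o q1) q2) as [p [Hp1 Hp2]]. { rewrite Hwu', Eq. reflexivity. }
    assert (Hxp : x \o p = q1).
    { apply UF; auto. rewrite Hfx', Hp2. exact (eq_sym Eq). }
    exists p. split; [exact Hxp|split; [exact Hp2|]].
    intros h' H1 H2. apply JM; [rewrite H1, Hxp|rewrite H2, Hp2]; reflexivity.
  - split; [exact Hwu|]. intros Q q1 q2 Eq.
    destruct (cover HR y q2 Hy) as [Q1 [cv [z [Hcv Hz]]]].
    destruct (OE Q1 (q1 \o cv) z) as [p [Hp1 Hp2]].
    { rewrite cA, Eq, <- cA, Hz. reflexivity. }
    destruct (regepi_desc cv (x \o p) Hcv) as [hx Hhx].
    { intros Q2 l1 l2 El. nrm. apply UF.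
      - rewrite (cA x p l1), (cA x p l2), (cA u (x \o p) l1), (cA u (x \o p) l2), Hp1.
        nrm. rewrite El. reflexivity.
      - rewrite !Hfx', (cA phi p l1), (cA phi p l2), Hp2, (cA y z l1), (cA y z l2), <- Hz.
        nrm. rewrite El. reflexivity. }
    assert (H1 : u \o hx = q1).
    { apply (regepi_epi cv Hcv). nrm. rewrite Hhx. exact Hp1. }
    assert (H2 : f \o hx = q2).
    { apply (regepi_epi cv Hcv). nrm. rewrite Hhx, Hfx', Hp2. symmetry. exact Hz. }
    exists hx. split; [exact H1|split; [exact H2|]].
    intros h' E1 E2. apply UF; [rewrite E1, H1|rewrite E2, H2]; reflexivity.
Qed.
Print Assumptions proposition4p2.
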